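(* Let $\mathcal{I}$ be the set of channels $\rho\mapsto U\rho U^\dagger$ with $U=H^{\otimes n}DH^{\otimes n}$, where $D$ is a product of gates from $\{Z,CZ\}$ (acting on arbitrary qubits/pairs of qubits) containing at least one $CZ$ gate. There is an absolute constant $C$ such that for every sample $S=(z_1,\ldots,z_m)$ with $z_i\in\mathbb{F}_2^n\times\mathbb{F}_2^n$, \[ \hat{R}_S(\mathcal{F}(\mathcal{I}))\le\frac{C\,n}{\sqrt m}\max_{\Phi\in\mathcal{I}}\|\vec f_\Phi\|_\infty . \]
   Context: $H$ is the Hadamard gate, $Z=\mathrm{diag}(1,-1)$, $CZ$ the controlled-$Z$ gate. For a channel $\Phi$ on $n$ qubits, $f_\Phi(x,y)=\mathrm{Tr}[\Phi(|x\rangle\langle x|)\,|y\rangle\langle y|]$ for $x,y\in\mathbb{F}_2^n$; $\mathcal{F}(\Omega)=\{f_\Phi:\Phi\in\Omega\}$; $\vec f_\Phi=(f_\Phi(z_1),\ldots,f_\Phi(z_m))$. Empirical Rademacher complexity: $\hat{R}_S(\mathcal{G})=\mathbb{E}_{\epsilon}[\sup_{g\in\mathcal{G}}\frac1m\sum_i\epsilon_i g(z_i)]$, $\epsilon_i$ i.i.d. uniform on $\{\pm1\}$. *)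

(* Defs.v *)
From HB Require Import structures.
From mathcomp Require Import all_boot all_order all_algebra.
From mathcomp Require Import complex mxtens.
From mathcomp Require Import boolp classical_sets reals.

Set Implicit Arguments.
Unset Strict Implicit.
Unset Printing Implicit Defensive.

Import Order.TTheory GRing.Theory Num.Theory.
Local Open Scope ring_scope.
Local Open Scope classical_set_scope.
Local Open Scope complex_scope.

Section Quantum.
Variable R : realType.
Local Notation C := (complex R).

(* n-fold tensor product  F 0 (x) F 1 (x) ... (x) F (n-1)  of (p x q) matrices;
   qubit i is tensor factor i. *)
Fixpoint tensn {p q : nat} (n : nat) : ('I_n -> 'M[C]_(p, q)) -> 'M[C]_(p ^ n, q ^ n) :=
  match n return ('I_n -> 'M[C]_(p, q)) -> 'M[C]_(p ^ n, q ^ n) with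
  | 0 => fun _ => 1%:M
  | n'.+1 => fun F => castmx (esym (expnS p n'), esym (expnS q n'))
                          (F ord0 *t tensn (fun i : 'I_n' => F (lift ord0 i)))
  end.

Definition Hmat : 'M[C]_2 :=
  \matrix_(a < 2, b < 2)
     (((Num.sqrt (2 : R))^-1)%:C * (if (a == 1 :> nat) && (b == 1 :> nat) then -1 else 1)).
Definition Zmat : 'M[C]_2 := \matrix_(a < 2, b < 2) (if a == b then (if a == 1 :> nat then -1 else 1) else 0).
Definition P0 : 'M[C]_2 := \matrix_(a < 2, b < 2) (if (a == 0 :> nat) && (b == 0 :> nat) then 1 else 0).
Definition P1 : 'M[C]_2 := \matrix_(a < 2, b < 2) (if (a == 1 :> nat) && (b == 1 :> nat) then 1 else 0).

Definition ket1 (b : 'F_2) : 'cV[C]_2 := \col_(a < 2) (if (a : nat) == (b : nat) then 1 else 0).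

Definition Hn (n : nat) : 'M[C]_(2 ^ n) := tensn (fun _ : 'I_n => Hmat).

Definition Zgate (n : nat) (i : 'I_n) : 'M[C]_(2 ^ n) :=
  tensn (fun k : 'I_n => if k == i then Zmat else 1%:M).

Definition CZgate (n : nat) (i j : 'I_n) : 'M[C]_(2 ^ n) :=
  tensn (fun k : 'I_n => if k == i then P0 else 1%:M)
  + tensn (fun k : 'I_n => if k == i then P1 else if k == j then Zmat else 1%:M).

Inductive gate (n : nat) := GZ of 'I_n | GCZ of 'I_n & 'I_n.

Definition gate_mx (n : nat) (g : gate n) : 'M[C]_(2 ^ n) :=
  match g with GZ i => Zgate i | GCZ i j => CZgate i j end.

Definition gate_ok (n : nat) (g : gate n) : bool :=
  match g with GZ _ => true | GCZ i j => i != j end.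
Definition is_CZ (n : nat) (g : gate n) : bool :=
  match g with GZ _ => false | GCZ _ _ => true end.

Definition circuit_mx (n : nat) (gs : seq (gate n)) : 'M[C]_(2 ^ n) :=
  foldr (fun g M => gate_mx g *m M) 1%:M gs.

Definition adjmx (k : nat) (U : 'M[C]_k) : 'M[C]_k := (map_mx (@conjc R) U)^T.

Definition channel (n : nat) := 'M[C]_(2 ^ n) -> 'M[C]_(2 ^ n).

Definition unitary_channel (n : nat) (U : 'M[C]_(2 ^ n)) : channel n :=
  fun rho => U *m rho *m adjmx U.

Definition Iclass (n : nat) : set (channel n) :=
  [set Phi | exists gs : seq (gate n),
      [/\ all (@gate_ok n) gs, has (@is_CZ n) gs &
          Phi = unitary_channel (Hn n *m circuit_mx gs *m Hn n)]].

Definition bits (n : nat) := 'rV['F_2]_n.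

Definition ket (n : nat) (x : bits n) : 'M[C]_(2 ^ n, 1 ^ n) :=
  tensn (fun i : 'I_n => ket1 (x 0 i)).
Definition ketbra (n : nat) (x : bits n) : 'M[C]_(2 ^ n) :=
  ket x *m (map_mx (@conjc R) (ket x))^T.

(* f_Phi(x,y) = Tr[Phi(|x><x|) |y><y|]  (a real number; we take the real part of the
   complex trace) *)
Definition fPhi (n : nat) (Phi : channel n) (z : bits n * bits n) : R :=
  complex.Re (\tr (Phi (ketbra z.1) *m ketbra z.2)).

Definition Fclass (n : nat) (Omega : set (channel n)) : set (bits n * bits n -> R) :=
  [set fPhi Phi | Phi in Omega].

(* empirical Rademacher complexity: expectation over eps uniform on {+-1}^m
   (eps_i = +1 iff the bool is true) of the supremum *)
Definition sgnb (b : bool) : R := if b then 1 else -1.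
Definition rademacher {X : Type} (m : nat) (G : set (X -> R)) (S : 'I_m -> X) : R :=
  (2 ^+ m)^-1 * \sum_(eps : {ffun 'I_m -> bool})
     sup [set (m%:R)^-1 * \sum_(i < m) sgnb (eps i) * g (S i) | g in G].

Definition supnorm_on {X : Type} (m : nat) (f : X -> R) (S : 'I_m -> X) : R :=
  \big[Num.max/0]_(i < m) `|f (S i)|.

End Quantum.
Arguments Iclass {R} n.

(* Main.v *)
Require Import Defs.
From HB Require Import structures.
From mathcomp Require Import all_boot all_order all_algebra.
From mathcomp Require Import complex mxtens.
From mathcomp Require Import boolp classical_sets reals.
From mathcomp Require Import sequences exp.
From mathcomp Require Import ring lra zify.
Import Order.TTheory GRing.Theory Num.Theory.
Local Open Scope ring_scope.
Set Implicit Arguments. Unset Strict Implicit. Unset Printing Implicit Defensive.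

Section Diag.
Variable R : realType.
Local Notation C := (complex R).

Lemma tensn_diag (n : nat) : exists sg : 'I_n -> 'I_(2 ^ n) -> 'I_2,
  forall F : 'I_n -> 'M[C]_2, (forall k (a b : 'I_2), a != b -> F k a b = 0) ->
  forall i j : 'I_(2 ^ n), tensn F i j =
     if i == j then \prod_(k < n) F k (sg k i) (sg k i) else 0.
Proof.
elim: n => [|n [sg IH]].
  exists (fun _ _ => ord0).
  move=> F _ i j; rewrite /= big_ord0 mxE.
  by case: (i == j).
pose cst (i : 'I_(2 ^ n.+1)) : 'I_(2 * 2 ^ n) := cast_ord (expnS 2 n) i.
exists (fun k i => match unlift ord0 k with
                  | None => (mxtens_unindex (cst i)).1
                  | Some k' => sg k' (mxtens_unindex (cst i)).2 end).
move=> F hF i j.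
rewrite /= castmxE /= big_ord_recl /= unlift_none.
have -> : cast_ord (esym (esym (expnS 2 n))) i = cst i by apply: val_inj.
have -> : cast_ord (esym (esym (expnS 2 n))) j = cst j by apply: val_inj.
rewrite mxE.
under eq_bigr do rewrite liftK.
rewrite (IH (fun k => F (lift ord0 k))); last by move=> k a b; apply: hF.
have inj : injective (fun i => mxtens_unindex (cst i)).
  move=> x y /(can_inj (@mxtens_unindexK _ _)) h; apply: val_inj.
  by move/(congr1 val): h.
case: (eqVneq (mxtens_unindex (cst i)).1 (mxtens_unindex (cst j)).1) => e1; last first.
  rewrite (hF ord0 _ _ e1) mul0r; case: eqP => // eij; by rewrite eij eqxx in e1.
case: (eqVneq (mxtens_unindex (cst i)).2 (mxtens_unindex (cst j)).2) => e2; last first.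
  rewrite mulr0; case: eqP => // eij; by rewrite eij eqxx in e2.
have eij : i = j.
  apply: inj; move: e1 e2; case: (mxtens_unindex (cst i)) => a b;
  case: (mxtens_unindex (cst j)) => c d /= -> -> //.
by rewrite eij !eqxx.
Qed.

Lemma gate_facts n (g : gate n) : exists d : 'I_(2 ^ n) -> C,
  (forall a b, gate_mx R g a b = if a == b then d a else 0) /\ (forall a, d a * d a = 1).
Proof.
have [sg Hsg] := tensn_diag n.
have dZ : forall (a b : 'I_2), a != b -> Zmat R a b = 0.
  by move=> a b /negPf hab; rewrite mxE hab.
have d1 : forall (a b : 'I_2), a != b -> (1%:M : 'M[C]_2) a b = 0.
  by move=> a b /negPf hab; rewrite mxE hab.
have dP0 : forall (a b : 'I_2), a != b -> P0 R a b = 0.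
  move=> a b hab; rewrite mxE; case: a b hab => [[|[|]]] // ? [[|[|]]] //.
have dP1 : forall (a b : 'I_2), a != b -> P1 R a b = 0.
  move=> a b hab; rewrite mxE; case: a b hab => [[|[|]]] // ? [[|[|]]] //.
have Zsq : forall a : 'I_2, Zmat R a a * Zmat R a a = 1.
  by move=> a; rewrite mxE eqxx; case: ifP => _; rewrite ?mulrNN mulr1.
case: g => [i|i j] /=.
  exists (fun a => \prod_(k < n) (if k == i then Zmat R else 1%:M) (sg k a) (sg k a)).
  split.
    move=> a b; rewrite /Zgate Hsg //.
    by move=> k a' b' hab; case: (k == i); [apply: dZ|apply: d1].
  move=> a; rewrite -big_split /=; apply: big1 => k _.
  by case: (k == i) => //; rewrite mxE eqxx mulr1.
pose F1 := fun k : 'I_n => if k == i then P0 R else 1%:M.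
pose F2 := fun k : 'I_n => if k == i then P1 R else if k == j then Zmat R else 1%:M.
have hF1 : forall k (a b : 'I_2), a != b -> F1 k a b = 0.
  by move=> k a b hab; rewrite /F1; case: (k == i); [apply: dP0|apply: d1].
have hF2 : forall k (a b : 'I_2), a != b -> F2 k a b = 0.
  move=> k a b hab; rewrite /F2; case: (k == i); first by apply: dP1.
  by case: (k == j); [apply: dZ|apply: d1].
exists (fun a => \prod_(k < n) F1 k (sg k a) (sg k a) + \prod_(k < n) F2 k (sg k a) (sg k a)).
split.
  move=> a b; rewrite /CZgate mxE -/(tensn F1) -/(tensn F2) (Hsg _ hF1) (Hsg _ hF2).
  by case: (a == b); rewrite ?addr0.
move=> a.
have -> : \prod_(k < n) F1 k (sg k a) (sg k a) = P0 R (sg i a) (sg i a).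
  rewrite (bigD1 i) //= big1 ?mulr1 /F1 ?eqxx // => k /negPf ->.
  by rewrite mxE eqxx.
have [u [-> hu]] : exists u : C, \prod_(k < n) F2 k (sg k a) (sg k a)
      = P1 R (sg i a) (sg i a) * u /\ u * u = 1.
  exists (\prod_(k < n | k != i) F2 k (sg k a) (sg k a)); split.
    by rewrite (bigD1 i) //= /F2 eqxx.
  rewrite -big_split /=; apply: big1 => k /negPf ki; rewrite /F2 ki.
  by case: (k == j); rewrite ?Zsq // mxE eqxx mulr1.
rewrite !mxE; case: (sg i a) => [[|[|]]] //= _.
  by rewrite mul0r addr0 mulr1.
by rewrite add0r mul1r.
Qed.

Definition dg n (g : gate n) (a : 'I_(2 ^ n)) : C := gate_mx R g a a.
Lemma dg_diag n (g : gate n) a b : gate_mx R g a b = if a == b then dg g a else 0.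
Proof.
have [d [h1 _]] := gate_facts g; rewrite /dg h1 h1 eqxx.
by case: eqP => // ->.
Qed.
Lemma dg_sq n (g : gate n) a : dg g a * dg g a = 1.
Proof. have [d [h1 h2]] := gate_facts g; by rewrite /dg h1 eqxx. Qed.

Definition codeT n := ('I_n + 'I_n * 'I_n)%type.
Definition gate_of n (c : codeT n) : gate n :=
  match c with inl i => GZ i | inr ij => GCZ ij.1 ij.2 end.
Definition code n (g : gate n) : codeT n :=
  match g with GZ i => inl i | GCZ i j => inr (i, j) end.
Lemma gate_ofK n (g : gate n) : gate_of (code g) = g.
Proof. by case: g. Qed.

Definition par n (gs : seq (gate n)) : {ffun codeT n -> bool} :=
  foldr (fun g (p : {ffun codeT n -> bool}) => [ffun c => (c == code g) (+) p c] : {ffun codeT n -> bool}) [ffun=> false] gs.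
Definition Dmx n (p : {ffun codeT n -> bool}) : 'M[C]_(2 ^ n) :=
  \matrix_(a, b) if a == b then \prod_(c : codeT n) (if p c then dg (gate_of c) a else 1) else 0.

Lemma circ_par n (gs : seq (gate n)) : circuit_mx R gs = Dmx (par gs).
Proof.
elim: gs => [|g gs IH].
  apply/matrixP => a b; rewrite !mxE /=.
  case: eqP => // _; rewrite big1 // => c _; by rewrite ffunE.
rewrite /= IH; apply/matrixP => a b.
rewrite !mxE (bigD1 a) //= big1 ?addr0; last first.
  by move=> k /negPf ka; rewrite dg_diag eq_sym ka mul0r.
rewrite dg_diag eqxx !mxE; case: eqP => _; last by rewrite mulr0.
rewrite (bigD1 (code g)) //= [in RHS](bigD1 (code g)) //= ffunE eqxx /=.
rewrite mulrA; congr (_ * _); last first.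
  by apply: eq_bigr => c /negPf cg; rewrite ffunE cg.
rewrite gate_ofK; case: (par gs (code g)) => /=; by rewrite ?dg_sq ?mulr1.
Qed.
End Diag.

Section Massart.
Variable R : realType.

Lemma cosh_bound (t : R) : t ^+ 2 <= 4^-1 ->
  2^-1 * (expR t + expR (- t)) <= 1 + 2 * t ^+ 2.
Proof.
move=> ht.
have h1 : 1 - t <= expR (- t) by exact: expR_ge1Dx.
have h2 : 1 + t <= expR t by exact: expR_ge1Dx.
have hm : expR t * expR (- t) = 1 by rewrite -expRD subrr expR0.
have u0 := expR_gt0 t. have v0 := expR_gt0 (- t).
move: h1 h2 hm u0 v0; set u := expR t; set v := expR (- t) => h1 h2 hm u0 v0.
have hu : u * (1 - t) <= 1 by rewrite -[X in _ <= X]hm ler_pM2l.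
have hv : v * (1 + t) <= 1 by rewrite -[X in _ <= X]hm mulrC ler_pM2r.
have ht1 : t <= 2^-1 /\ - 2^-1 <= t by split; nra.
nra.
Qed.

Lemma jensen_exp (T : finType) (x : T -> R) : (0 < #|T|)%N ->
  expR (#|T|%:R^-1 * \sum_e x e) <= #|T|%:R^-1 * \sum_e expR (x e).
Proof.
move=> hT; set c := #|T|%:R^-1 * \sum_e x e.
have hc : forall e, expR c * (1 + (x e - c)) <= expR (x e).
  move=> e; rewrite -[X in _ <= expR X](subrK c (x e)) expRD mulrC.
  by rewrite ler_pM2r ?expR_gt0 // expR_ge1Dx.
have hN : (0 : R) < #|T|%:R by rewrite ltr0n.
apply: le_trans (_ : #|T|%:R^-1 * \sum_e (expR c * (1 + (x e - c))) <= _).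
  have hs : \sum_e (1 + (x e - c)) = #|T|%:R.
    rewrite big_split /= sumrB.
    have e1 : \sum_(i : T) (1 : R) = #|T|%:R by rewrite sumr_const.
    have e2 : \sum_(i : T) c = #|T|%:R * c by rewrite sumr_const mulr_natl.
    rewrite e1 e2.
    by rewrite /c mulrA mulfV ?gt_eqF // mul1r subrr addr0.
  by rewrite -mulr_sumr hs mulrCA mulVf ?mulr1 // gt_eqF.
by rewrite ler_pM2l ?invr_gt0 // ler_sum.
Qed.

Lemma massart (m K : nat) (I : finType) (P : pred I) (a : I -> 'I_m -> R) (M lam : R)
  (pick : {ffun 'I_m -> bool} -> I) :
  (#|I| <= 2 ^ K)%N -> 0 <= M -> (forall p, P p -> forall i, `|a p i| <= M) ->
  (forall e, P (pick e)) -> 0 < lam -> lam * M <= 2^-1 ->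
  lam * ((2 ^+ m)^-1 * \sum_(e : {ffun 'I_m -> bool}) \sum_(i < m) sgnb R (e i) * a (pick e) i)
   <= K%:R + m%:R * (2 * (lam * M) ^+ 2).
Proof.
move=> hI M0 haM hpick lam0 hlM.
pose X p (e : {ffun 'I_m -> bool}) := \sum_(i < m) sgnb R (e i) * a p i.
have cardE : #|{ffun 'I_m -> bool}|%:R = (2:R) ^+ m.
  by rewrite card_ffun card_bool card_ord natrX.
have cE0 : (0 < #|{ffun 'I_m -> bool}|)%N.
  by rewrite card_ffun card_bool card_ord expn_gt0.
have two0 : (0:R) < 2 ^+ m by rewrite exprn_gt0.
pose B := expR (2 * (lam * M) ^+ 2).
have stepA : expR (lam * ((2 ^+ m)^-1 * \sum_e X (pick e) e))
    <= (2 ^+ m)^-1 * \sum_e expR (lam * X (pick e) e).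
  have := jensen_exp (fun e => lam * X (pick e) e) cE0.
  by rewrite cardE -mulr_sumr mulrCA.
have stepB : (2 ^+ m)^-1 * \sum_e expR (lam * X (pick e) e)
    <= \sum_(p | P p) ((2 ^+ m)^-1 * \sum_e expR (lam * X p e)).
  rewrite -mulr_sumr exchange_big /= ler_pM2l ?invr_gt0 //.
  apply: ler_sum => e _; rewrite (bigD1 (pick e)) //= lerDl.
  by apply: sumr_ge0 => p _; rewrite expR_ge0.
have stepC : forall p, P p -> (2 ^+ m)^-1 * \sum_e expR (lam * X p e) <= B ^+ m.
  move=> p Pp.
  pose F (i : 'I_m) (b : bool) := expR (lam * (sgnb R b * a p i)).
  have -> : \sum_e expR (lam * X p e) = \sum_(e : {ffun 'I_m -> bool}) \prod_(i < m) F i (e i).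
    by apply: eq_bigr => e _; rewrite /X mulr_sumr expR_sum.
  rewrite -(bigA_distr_bigA (fun i b => F i b)) /=.
  rewrite -exprVn -[in X in X * _](card_ord m) -prodr_const -big_split /=.
  rewrite -[in X in _ <= X](card_ord m) -prodr_const.
  apply: ler_prod => i _; apply/andP; split.
    by rewrite mulr_ge0 ?invr_ge0 ?ler0n // sumr_ge0 // => b _; rewrite expR_ge0.
  rewrite big_bool /F /= mul1r mulN1r mulrN.
  have ht : (lam * a p i) ^+ 2 <= (lam * M) ^+ 2.
    have := haM p Pp i; rewrite ler_norml => /andP [h1 h2].
    have h3 : 0 <= (M - a p i) * (M + a p i) by apply: mulr_ge0; lra.
    rewrite !exprMn ler_pM2l ?exprn_gt0 //; nra.
  apply: le_trans (cosh_bound _) _.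
    apply: le_trans ht _; have hlM0 : 0 <= lam * M by apply: mulr_ge0 => //; apply: ltW.
    move: hlM0 hlM; set y := lam * M => h1 h2; nra.
  apply: le_trans _ (expR_ge1Dx _); rewrite lerD2l ler_pM2l //.
have stepD : \sum_(p | P p) ((2 ^+ m)^-1 * \sum_e expR (lam * X p e))
    <= expR K%:R * B ^+ m.
  apply: le_trans (_ : \sum_(p | P p) B ^+ m <= _).
    by apply: ler_sum => p Pp; apply: stepC.
  have B0 : 0 < B ^+ m by rewrite exprn_gt0 // expR_gt0.
  apply: le_trans (_ : \sum_(p : I) B ^+ m <= _).
    rewrite [X in _ <= X](bigID P) /= lerDl.
    by apply: sumr_ge0 => p _; apply: ltW.
  rewrite sumr_const -[B ^+ m *+ _]mulr_natl ler_pM2r // -/(#|I|).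
  have h2 : (2:R) <= expR 1 by have := expR_ge1Dx (1:R); lra.
  apply: le_trans (_ : (2:R) ^+ K <= _).
    by rewrite -natrX ler_nat.
  rewrite -[X in _ <= expR X]mulr1 expRM_natl lerXn2r // nnegrE // expR_ge0 //.
have := le_trans stepA (le_trans stepB stepD).
by rewrite /B -expRM_natl -expRD ler_expR.
Qed.
End Massart.

Section Main.
Variable R : realType.
Variable n : nat.

Definition PhiP (p : {ffun codeT n -> bool}) : channel R n :=
  unitary_channel (Hn R n *m Dmx R p *m Hn R n).
Definition Pc (p : {ffun codeT n -> bool}) : bool :=
  `[< exists gs : seq (gate n), [/\ all (@gate_ok n) gs, has (@is_CZ n) gs & par gs = p] >].

Lemma Iclass_Pc Phi : Iclass n Phi -> exists2 p, Pc p & Phi = PhiP p.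
Proof.
case=> gs [h1 h2 ->]; exists (par gs); first by apply/asboolP; exists gs.
by rewrite /PhiP circ_par.
Qed.

Lemma Pc_Iclass p : Pc p -> Iclass n (PhiP p).
Proof.
move/asboolP => [gs [h1 h2 <-]]; exists gs; split => //.
by rewrite /PhiP circ_par.
Qed.

Lemma Pc_n p : Pc p -> (0 < n)%N.
Proof.
move/asboolP => [gs [_ hC _]]; elim: gs hC => //= g gs IH /orP [|//].
case: g => // i j _; by case: i => i; case: n.
Qed.

Lemma card_codes : #|{ffun codeT n -> bool}| = (2 ^ (n + n * n))%N.
Proof. by rewrite card_ffun card_bool card_sum card_prod card_ord. Qed.

End Main.

Unset Implicit Arguments.
Local Open Scope classical_set_scope.

Theorem mainTheorem8 (R : realType) :
  exists Cst : R,
    forall (n m : nat) (S : 'I_m -> bits n * bits n),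
      (0 < m)%N ->
      rademacher (Fclass (Iclass (R:=R) n)) S
      <= Cst * n%:R / Num.sqrt (m%:R)
         * sup [set supnorm_on (fPhi Phi) S | Phi in Iclass (R:=R) n].
Proof.
exists 4 => n m S m0.
case: (pselect (exists p : {ffun codeT n -> bool}, Pc p)) => [[p0 Pp0]|none]; last first.
  have I0 : Iclass (R:=R) n = set0.
    apply/seteqP; split => // Phi /Iclass_Pc [p Pp _]; exfalso; apply: none; by exists p.
  rewrite /rademacher /Fclass I0 !image_set0 sup0 mulr0 big1 ?mulr0 // => eps _.
  by rewrite image_set0 sup0.
set M := sup _.
pose f p := fPhi (@PhiP R n p).
pose a p (i : 'I_m) := f p (S i).
have hub : has_ubound [set supnorm_on (fPhi Phi) S | Phi in Iclass (R:=R) n].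
  exists (\sum_p `|supnorm_on (f p) S|) => y [Phi /Iclass_Pc [p _ ->] <-].
  rewrite (bigD1 p) //=; apply: le_trans (ler_norm _) _; rewrite lerDl.
  by apply: sumr_ge0 => *; exact: normr_ge0.
have haM : forall p, Pc p -> forall i, `|a p i| <= M.
  move=> p Pp i; apply: le_trans (_ : supnorm_on (f p) S <= _).
    by rewrite /supnorm_on; exact: (le_bigmax 0 (fun i => `|f p (S i)|) i).
  by apply: ub_le_sup hub _ _; exists (@PhiP R n p) => //; exact: Pc_Iclass.
have M0 : 0 <= M by apply: le_trans (haM p0 Pp0 (Ordinal m0)); exact: normr_ge0.
pose h (eps : {ffun 'I_m -> bool}) p := m%:R^-1 * \sum_(i < m) sgnb R (eps i) * a p i.
pose A (eps : {ffun 'I_m -> bool}) := [set m%:R^-1 * \sum_(i < m) sgnb R (eps i) * g (S i) | g in Fclass (Iclass (R:=R) n)].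
have Aeq : forall eps y, A eps y <-> exists2 p, Pc p & y = h eps p.
  move=> eps y; split.
    by move=> [g [Phi /Iclass_Pc [p Pp ->] <-] <-]; exists p.
  move=> [p Pp ->]; exists (f p) => //; exists (@PhiP R n p) => //; exact: Pc_Iclass.
have supA : forall eps, exists2 p, Pc p & sup (A eps) = h eps p.
  move=> eps; case: (arg_maxP (h eps) Pp0) => p Pp hp; exists p => //.
  apply/eqP; rewrite eq_le; apply/andP; split.
    apply: ge_sup; first by exists (h eps p); apply/Aeq; exists p.
    by move=> y /Aeq [q Pq ->]; exact: hp.
  apply: ub_le_sup; first by exists (h eps p) => y /Aeq [q Pq ->]; exact: hp.
  by apply/Aeq; exists p.
pose pick eps := odflt p0 [pick p | Pc p && (sup (A eps) == h eps p)].
have hpick : forall eps, Pc (pick eps) /\ sup (A eps) = h eps (pick eps).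
  move=> eps; rewrite /pick; case: pickP => [q /andP [Pq /eqP e]|nn] //=.
  by have [q Pq e] := supA eps; move: (nn q); rewrite Pq e eqxx.
have -> : rademacher (Fclass (Iclass (R:=R) n)) S = m%:R^-1 *
    ((2 ^+ m)^-1 * \sum_(eps : {ffun 'I_m -> bool}) \sum_(i < m) sgnb R (eps i) * a (pick eps) i).
  rewrite /rademacher [RHS]mulrCA; congr (_ * _); rewrite mulr_sumr; apply: eq_bigr => eps _.
  exact: (hpick eps).2.
set E := (2 ^+ m)^-1 * _.
have two0 : (0:R) < 2 ^+ m by rewrite exprn_gt0.
have Etriv : E <= m%:R * M.
  apply: le_trans (_ : (2 ^+ m)^-1 * \sum_(eps : {ffun 'I_m -> bool}) (m%:R * M) <= _).
    rewrite ler_pM2l ?invr_gt0 //; apply: ler_sum => eps _.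
    apply: le_trans (_ : \sum_(i < m) M <= _); last by rewrite sumr_const card_ord mulr_natl.
    apply: ler_sum => i _; apply: le_trans (ler_norm _) _; rewrite normrM /sgnb.
    by case: (eps i); rewrite ?normrN normr1 mul1r; exact: haM (hpick eps).1 i.
  rewrite sumr_const card_ffun card_bool card_ord -[_ *+ (2 ^ m)]mulr_natl natrX.
  by rewrite mulKf ?gt_eqF.
have n0 := Pc_n Pp0.
have Kb : ((n + n * n)%:R : R) <= 2 * n%:R ^+ 2.
  rewrite -natrX -[2 * _]/((2%N)%:R * _) -natrM ler_nat; nia.
have s0 : 0 < Num.sqrt (m%:R : R) by rewrite sqrtr_gt0 ltr0n.
have hs : Num.sqrt (m%:R : R) ^+ 2 = m%:R by rewrite sqr_sqrtr ?ler0n.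
have N1 : (1 : R) <= n%:R by rewrite ler1n.
move: s0 hs Etriv; set s := Num.sqrt _ => s0 hs Etriv.
set N := n%:R in N1 Kb *.
suff hE : E <= 4 * N * s * M.
  rewrite -hs.
  have -> : 4 * N / s * M = (s ^+ 2)^-1 * (4 * N * s * M) by field; rewrite gt_eqF.
  by rewrite ler_pM2l ?invr_gt0 ?exprn_gt0.
case: (boolP ((2 * N <= s) && (0 < M))) => [/andP [h2 Mp] | hn]; last first.
  rewrite -hs in Etriv.
  case/nandP: hn => [hs2|hM].
    rewrite -ltNge in hs2; apply: le_trans Etriv _.
    have h3 : 0 <= (4 * N - s) * (s * M).
      by apply: mulr_ge0; [lra|apply: mulr_ge0 => //; apply: ltW].
    have -> : s ^+ 2 * M = 4 * N * s * M - (4 * N - s) * (s * M) by ring.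
    lra.
  have M00 : M = 0 by apply/eqP; rewrite eq_le M0 andbT leNgt.
  by move: Etriv; rewrite M00 !mulr0.
pose lam := N / (s * M).
have lam0 : 0 < lam by rewrite divr_gt0 ?mulr_gt0 //; lra.
have hlm : lam * M = N / s by rewrite /lam; field; rewrite ?gt_eqF.
have hlm2 : lam * M <= 2^-1.
  rewrite hlm ler_pdivrMr //; lra.
have := massart (pick := pick) (a := a) (P := @Pc n) (K := (n + n * n)%N)
  (eq_leq (card_codes n)) M0 haM (fun e => (hpick e).1) lam0 hlm2.
rewrite -/E -hs hlm.
have -> : s ^+ 2 * (2 * (N / s) ^+ 2) = 2 * N ^+ 2 by field; rewrite gt_eqF.
move=> hm.
have hE : lam * E <= lam * (4 * N * s * M).
  have -> : lam * (4 * N * s * M) = 4 * N ^+ 2 by rewrite /lam; field; rewrite ?gt_eqF.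
  lra.
by rewrite ler_pM2l in hE.
Qed.
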